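(* Let $G=(V,E)$ be a simple directed acyclic graph with capacities $C\in\mathbb{R}_{\ge0}^E$, $s,t\in V$ with a directed $s$-$t$ path, and budget $\gamma$ with $0<\gamma\le\min_{e\in E}C(e)$. For any interdiction strategy $w$ there exists an interdiction strategy $w'$ which is a probability distribution on the set of single-path flows (in $\mathcal{F}_{\le\gamma}$) such that $\Lambda(w',P)\ge\Lambda(w,P)$ for every set of user paths $P$.
   Context: An $s$-$t$ flow is a vector $\mathbf{f}\in\mathbb{R}^E$ with $0\le\mathbf{f}(e)\le C(e)$ for all $e$ and flow conservation at every $v\in V\setminus\{s,t\}$; its value is $val(\mathbf{f})=\sum_{(s,u)\in E}\mathbf{f}(s,u)$. $\mathcal{F}_{\le\gamma}$ denotes the set of $s$-$t$ flows of value at most $\gamma$. An interdiction strategy is a (finitely supported) probability distribution $w$ on $\mathcal{F}_{\le\gamma}$. A single-path flow is an $s$-$t$ flow whose positive entries all lie on the edges of one directed $s$-$t$ path. A set of user paths is a set $P=\{p_1,\dots,p_k\}$ of directed paths in $G$ (viewed as edge sets, not necessarily disjoint or with common endpoints) with initial flow values $\lambda_i\ge0$ such that $\sum_{i:e\in p_i}\lambda_i\le C(e)$ for all $e$. For an $s$-$t$ flow $\mathbf{f}$, $T(\mathbf{f},P)$ is the optimal value of: maximize $\sum_i\tilde\lambda_i$ s.t. $\sum_{i:e\in p_i}\tilde\lambda_i\le C(e)-\mathbf{f}(e)$ for all $e$, $0\le\tilde\lambda_i\le\lambda_i$. Define $\Lambda(\mathbf{f},P)=\sum_i\lambda_i-T(\mathbf{f},P)$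 and $\Lambda(w,P)=\sum_{\mathbf{f}}w(\mathbf{f})\Lambda(\mathbf{f},P)$. *)

(* Defs.v *)
From HB Require Import structures.
From mathcomp Require Import all_boot all_order all_algebra.
From mathcomp Require Import boolp classical_sets reals.
Set Implicit Arguments. Unset Strict Implicit. Unset Printing Implicit Defensive.
Import Order.TTheory GRing.Theory Num.Theory.
Local Open Scope ring_scope.
Local Open Scope classical_set_scope.

Section Defs.
Variables (V : finType) (R : realType).
Variable E : {set V * V}.

Definition erel : rel V := fun u v => (u, v) \in E.

Definition acyclic : Prop :=
  forall (x : V) (p : seq V), path erel x p -> last x p = x -> p = [::].

Definition is_dpath (x : V) (p : seq V) : bool := path erel x p.

Definition is_st_path (s t : V) (x : V) (p : seq V) : bool :=
  [&& x == s, path erel x p & last x p == t].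

Definition path_edges (x : V) (p : seq V) : seq (V * V) := zip (x :: p) p.

Variables (C : V * V -> R) (s t : V).

(* s-t flow: vector on E (values outside E are irrelevant) *)
Definition is_flow (f : V * V -> R) : Prop :=
  (forall e, e \in E -> 0 <= f e <= C e) /\
  (forall v, v != s -> v != t ->
     \sum_(u | (u, v) \in E) f (u, v) = \sum_(w | (v, w) \in E) f (v, w)).

Definition flow_val (f : V * V -> R) : R := \sum_(u | (s, u) \in E) f (s, u).

Definition flow_le (gamma : R) (f : V * V -> R) : Prop :=
  is_flow f /\ flow_val f <= gamma.

Definition single_path_flow (f : V * V -> R) : Prop :=
  is_flow f /\
  exists (x : V) (p : seq V), is_st_path s t x p /\
    forall e, e \in E -> 0 < f e -> e \in path_edges x p.

(* a set of user paths: k paths (x_i :: p_i) with initial flow values lam i *)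
Definition user_paths (k : nat) (P : 'I_k -> V * seq V) (lam : 'I_k -> R) : Prop :=
  (forall i, is_dpath (P i).1 (P i).2) /\
  (forall i, 0 <= lam i) /\
  (forall e, e \in E ->
     \sum_(i < k | e \in path_edges (P i).1 (P i).2) lam i <= C e).

(* T(f, P): optimal value of the residual LP *)
Definition T_val (k : nat) (P : 'I_k -> V * seq V) (lam : 'I_k -> R)
    (f : V * V -> R) : R :=
  sup [set y : R | exists lt : 'I_k -> R,
        (forall i, 0 <= lt i <= lam i) /\
        (forall e, e \in E ->
           \sum_(i < k | e \in path_edges (P i).1 (P i).2) lt i <= C e - f e) /\
        y = \sum_(i < k) lt i].

Definition Lambda_f (k : nat) (P : 'I_k -> V * seq V) (lam : 'I_k -> R)
    (f : V * V -> R) : R :=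
  \sum_(i < k) lam i - T_val P lam f.

(* a finitely supported probability distribution, as a list of (weight, flow) *)
Definition interdiction (gamma : R) (w : seq (R * (V * V -> R))) : Prop :=
  (forall a, a \in w -> 0 <= a.1 /\ flow_le gamma a.2) /\
  \sum_(a <- w) a.1 = 1.

Definition Lambda_w (k : nat) (P : 'I_k -> V * seq V) (lam : 'I_k -> R)
    (w : seq (R * (V * V -> R))) : R :=
  \sum_(a <- w) a.1 * Lambda_f P lam a.2.

End Defs.

(* Main.v *)
Require Import Defs.
From HB Require Import structures.
From mathcomp Require Import all_boot all_order all_algebra.
From mathcomp Require Import boolp classical_sets reals.
From mathcomp Require Import lra.
Import Order.TTheory GRing.Theory Num.Theory.
Local Open Scope ring_scope.
Set Implicit Arguments. Unset Strict Implicit. Unset Printing Implicit Defensive.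



Section Graph.
Variables (V : finType) (E : {set V * V}).
Hypothesis hacyc : acyclic E.

Lemma path_uniq x p : path (erel E) x p -> uniq (x :: p).
Proof.
elim: p x => [|y p IH] x //= /andP [hxy hp].
have := IH _ hp; rewrite /= => /andP[hy hu]; rewrite hy hu !andbT.
apply/negP => hx.
have hp' : path (erel E) x (y :: p) by rewrite /= hxy.
move: hp'; case/path.splitP: hx => p1 p2.
rewrite cat_path => /andP[h1 _].
have := hacyc h1; rewrite last_rcons => /(_ erefl).
by case: p1 {h1}.
Qed.

Lemma path_size x p : path (erel E) x p -> (size p < #|V|)%N.
Proof.
move=> /path_uniq /card_uniqP h.
have := max_card (mem (x :: p)); rewrite -/(card _) h.
by [].
Qed.

Lemma path_edges_in (r : rel V) x p : path r x p -> forall e, e \in path_edges x p -> r e.1 e.2.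
Proof.
elim: p x => [|y p IH] x //= /andP[hxy hp] e.
rewrite /path_edges /= in_cons => /orP[/eqP -> //|].
exact: IH.
Qed.

Lemma last_rev_belast (x : V) p : last (last x p) (rev (belast x p)) = x.
Proof.
have h : rev (x :: p) = rev (rcons (belast x p) (last x p)) by rewrite -lastI.
rewrite rev_cons rev_rcons in h.
have := congr1 (last x) h. by rewrite last_rcons /= => /esym.
Qed.

Lemma walk (r : rel V) (B : pred V) :
  (forall u v, r u v -> ~~ B v -> exists w, r v w) ->
  forall n v, (exists u, r u v) -> exists p, path r v p /\ (B (last v p) \/ size p = n).
Proof.
move=> hstep; elim=> [|n IH] v [u huv].
  by exists [::]; split => //; right.
case: (boolP (B v)) => hB.
  by exists [::]; split => //; left.
have [w hw] := hstep _ _ huv hB.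
have [p [hp hl]] := IH w (ex_intro _ v hw).
exists (w :: p); split; first by rewrite /= hw.
by case: hl => [h|h]; [left|right; rewrite /= h].
Qed.


Lemma zip_belast (x : V) p : zip (x :: p) p = zip (belast x p) p.
Proof. by elim: p x => [|y p IH] x //=; rewrite IH. Qed.

Lemma uniq2 (Z : seq (V * V)) u u' v : uniq (unzip2 Z) -> (u, v) \in Z -> (u', v) \in Z -> u = u'.
Proof.
elim: Z => [|[a b] Z IH] //= /andP[hb hu].
rewrite !in_cons => /orP[/eqP h1|h1] /orP[/eqP h2|h2].
- by case: h1 => -> _; case: h2.
- case: h1 => _ hv; subst b; by move: hb; rewrite (map_f snd h2).
- case: h2 => _ hv; subst b; by move: hb; rewrite (map_f snd h1).
- exact: IH.
Qed.

Lemma uniq1 (Z : seq (V * V)) u v v' : uniq (unzip1 Z) -> (u, v) \in Z -> (u, v') \in Z -> v = v'.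
Proof.
elim: Z => [|[a b] Z IH] //= /andP[hb hu].
rewrite !in_cons => /orP[/eqP h1|h1] /orP[/eqP h2|h2].
- by case: h1 => _ ->; case: h2.
- case: h1 => hv _; subst a; by move: hb; rewrite (map_f fst h2).
- case: h2 => hv _; subst a; by move: hb; rewrite (map_f fst h1).
- exact: IH.
Qed.

End Graph.



Section Ind.
Variables (V : finType) (R : realType) (E : {set V * V}).

Definition ind (Z : seq (V * V)) (e : V * V) : R := if e \in Z then 1 else 0.

Lemma G2 Z v : uniq (unzip2 Z) -> {subset Z <= E} ->
  \sum_(u | (u, v) \in E) ind Z (u, v) = if v \in unzip2 Z then 1 else 0.
Proof.
move=> hu hZ; rewrite big_mkcond /=.
rewrite (eq_bigr (fun u => ind Z (u, v))); last first.
  by move=> u _; rewrite /ind; case: ifP => // h; case: ifP => // /hZ; rewrite h.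
case: ifP => hv.
  have [[u0 v0] h0 /= hv0] := mapP hv; subst v0.
  rewrite (bigD1 u0) //= big1 ?addr0; first by rewrite /ind h0.
  move=> u hu0; rewrite /ind; case: ifP => // h.
  by move: hu0; rewrite (uniq2 hu h h0) eqxx.
apply: big1 => u _; rewrite /ind; case: ifP => // h.
by move: hv; rewrite (map_f snd h).
Qed.

Lemma G1 Z v : uniq (unzip1 Z) -> {subset Z <= E} ->
  \sum_(u | (v, u) \in E) ind Z (v, u) = if v \in unzip1 Z then 1 else 0.
Proof.
move=> hu hZ; rewrite big_mkcond /=.
rewrite (eq_bigr (fun u => ind Z (v, u))); last first.
  by move=> u _; rewrite /ind; case: ifP => // h; case: ifP => // /hZ; rewrite h.
case: ifP => hv.
  have [[v0 u0] h0 /= hv0] := mapP hv; subst v0.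
  rewrite (bigD1 u0) //= big1 ?addr0; first by rewrite /ind h0.
  move=> u hu0; rewrite /ind; case: ifP => // h.
  by move: hu0; rewrite (uniq1 hu h h0) eqxx.
apply: big1 => u _; rewrite /ind; case: ifP => // h.
by move: hv; rewrite (map_f fst h).
Qed.

Hypothesis hacyc : acyclic E.

Lemma path_edgesE x p : path (erel E) x p -> {subset path_edges x p <= E}.
Proof. by move=> hp e /(path_edges_in hp); case: e. Qed.

Lemma ind_in x p v : path (erel E) x p ->
  \sum_(u | (u, v) \in E) ind (path_edges x p) (u, v) = if v \in p then 1 else 0.
Proof.
move=> hp; have hu := path_uniq hacyc hp.
have e2 : unzip2 (path_edges x p) = p by rewrite /path_edges unzip2_zip //= leqnSn.
rewrite G2; [by rewrite e2 | by rewrite e2; case/andP: hu | exact: path_edgesE].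
Qed.

Lemma ind_out x p v : path (erel E) x p ->
  \sum_(u | (v, u) \in E) ind (path_edges x p) (v, u) = if v \in belast x p then 1 else 0.
Proof.
move=> hp; have hu := path_uniq hacyc hp.
have e1 : unzip1 (path_edges x p) = belast x p.
  by rewrite /path_edges zip_belast unzip1_zip // size_belast.
rewrite G1; [by rewrite e1 | | exact: path_edgesE].
rewrite e1; by move: hu; rewrite lastI rcons_uniq => /andP[].
Qed.

Lemma mem_belast_mid (x v : V) p : v != x -> v != last x p -> (v \in p) = (v \in belast x p).
Proof.
move=> h1 h2.
have h : (v \in x :: p) = (v \in rcons (belast x p) (last x p)) by rewrite -lastI.
by move: h; rewrite in_cons mem_rcons in_cons (negbTE h1) (negbTE h2).
Qed.

End Ind.



Section Sums.
Variable (R : realType).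
Lemma psum_exists (I : finType) (P : pred I) (F : I -> R) :
  0 < \sum_(i | P i) F i -> exists i, P i && (0 < F i).
Proof.
move=> h; apply/not_existsP => hn; move: h; apply/negP; rewrite -leNgt.
have : \sum_(i | P i) F i <= \sum_(i | P i) (0 : R).
  apply: ler_sum => i hi.
  by rewrite leNgt; apply/negP => hF; apply: (hn i); rewrite hi hF.
by rewrite big1_eq.
Qed.

Lemma psum_pos (I : finType) (P : pred I) (F : I -> R) i0 :
  (forall i, P i -> 0 <= F i) -> P i0 -> 0 < F i0 -> 0 < \sum_(i | P i) F i.
Proof.
move=> h0 hi0 hF; rewrite (bigD1 i0) //=.
have : 0 <= \sum_(i | P i && (i != i0)) F i by apply: sumr_ge0 => i /andP[/h0].
lra.
Qed.
End Sums.

Section Find.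
Variables (V : finType) (R : realType) (E : {set V * V}) (s t : V).
Hypothesis hacyc : acyclic E.
Hypothesis hst : exists (x : V) (p : seq V), is_st_path E s t x p.

Definition nonneg (f : V * V -> R) := forall e, e \in E -> 0 <= f e.
Definition consv (f : V * V -> R) := forall v, v != s -> v != t ->
     \sum_(u | (u, v) \in E) f (u, v) = \sum_(w | (v, w) \in E) f (v, w).

Lemma find_path (f : V * V -> R) a b : nonneg f -> consv f -> (a, b) \in E -> 0 < f (a, b) ->
  exists p, [/\ is_st_path E s t s p, p != [::] & forall e, e \in path_edges s p -> 0 < f e].
Proof.
move=> hnn hcons habE hab0.
pose r := fun x y => ((x, y) \in E) && (0 < f (x, y)).
pose B := fun v => (v == s) || (v == t).
have hr : forall x y, r x y -> erel E x y by move=> x y /andP[].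
have hab : r a b by rewrite /r habE hab0.
have fstep : forall u v, r u v -> ~~ B v -> exists w, r v w.
  move=> u v /andP[huv hf]; rewrite /B negb_or => /andP[hs ht].
  have : 0 < \sum_(u | (u, v) \in E) f (u, v).
    by apply: (psum_pos (i0 := u)) => // x hx; apply: hnn.
  by rewrite hcons // => /psum_exists [w hw]; exists w.
have bstep : forall u v, r v u -> ~~ B v -> exists w, r w v.
  move=> u v /andP[huv hf]; rewrite /B negb_or => /andP[hs ht].
  have : 0 < \sum_(w | (v, w) \in E) f (v, w).
    by apply: (psum_pos (i0 := u)) => // x hx; apply: hnn.
  by rewrite -hcons // => /psum_exists [w hw]; exists w.
have [p2 [hp2 hl2]] := walk fstep #|V| (ex_intro _ a hab).
have hz : B (last b p2).
  case: hl2 => // hs; have := path_size hacyc (sub_path hr hp2).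
  by rewrite hs ltnn.
have [q [hq hlq]] := @walk _ (fun x y => r y x) B bstep #|V| a (ex_intro _ b hab).
rewrite -rev_path in hq.
have hy : B (last a q).
  case: hlq => // hs; have := path_size hacyc (sub_path hr hq).
  by rewrite size_rev size_belast hs ltnn.
set y := last a q in hq hy.
set W := rev (belast a q) ++ b :: p2.
have hW : path r y W by rewrite cat_path hq /= last_rev_belast hab hp2.
have hlW : last y W = last b p2 by rewrite last_cat last_rev_belast.
have hWE : path (erel E) y W := sub_path hr hW.
have hWn : W != [::] by rewrite /W; case: (rev _).
case: (eqVneq y (last b p2)) => hyz.
  by move: hWn; rewrite (hacyc hWE) // hlW.
move: hy hz; rewrite /B; case: (eqVneq y s) => hys /=.
  move=> _ /orP[/eqP hzs|/eqP hzt]; first by move: hyz; rewrite hys hzs eqxx.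
  exists W; split => //.
    by rewrite /is_st_path eqxx -hys hWE hlW hzt eqxx.
  move=> [e1 e2] he; rewrite -hys in he; have := path_edges_in hW he.
  by case/andP.
move=> /eqP hyt /orP[/eqP hzs|/eqP hzt]; last by move: hyz; rewrite hyt hzt eqxx.
have [x0 [p0 /and3P[/eqP hx0 hp0 hl0]]] := hst; subst x0.
have hc : path (erel E) y (W ++ p0) by rewrite cat_path hWE hlW hzs hp0.
have := hacyc hc; rewrite last_cat hlW hzs (eqP hl0) hyt => /(_ erefl).
by case: (W) hWn.
Qed.


Lemma seq_min (T : eqType) (F : T -> R) (l : seq T) : l != [::] ->
  exists2 x, x \in l & forall y, y \in l -> F x <= F y.
Proof.
elim: l => [|a l IH] // _.
case: (eqVneq l [::]) => [->|hl].
  by exists a; [rewrite mem_head | move=> y; rewrite inE => /eqP ->].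
have [x hx hmin] := IH hl.
case: (leP (F a) (F x)) => h.
  exists a; first by rewrite mem_head.
  move=> y; rewrite inE => /orP[/eqP ->//|/hmin]; exact: le_trans.
exists x; first by rewrite inE hx orbT.
move=> y; rewrite inE => /orP[/eqP ->|/hmin //]; exact: ltW.
Qed.

Lemma dec n (f : V * V -> R) : (#|[set e | (e \in E) && (0 < f e)%R]| <= n)%N ->
  nonneg f -> consv f ->
  exists L : seq (R * seq V),
    (forall a, a \in L -> 0 <= a.1 /\ is_st_path E s t s a.2) /\
    \sum_(a <- L) a.1 <= flow_val E s f /\
    (forall e, e \in E -> f e <= \sum_(a <- L) a.1 * ind R (path_edges s a.2) e).
Proof.
elim: n f => [|n IH] f hn hnn hcons;
  (case: (boolP [exists e, (e \in E) && (0 < f e)]) => hex; last first).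
- exists [::]; split => //; split; first by rewrite big_nil; apply: sumr_ge0 => u hu; apply: hnn.
  move=> e he; rewrite big_nil leNgt; apply/negP => h.
  by move/negP: hex; apply; apply/existsP; exists e; rewrite he h.
- have [e he] := existsP hex.
  have : (0 < #|[set e | (e \in E) && (0 < f e)%R]|)%N by apply/card_gt0P; exists e; rewrite inE.
  by rewrite lt0n -leqn0 hn.
- exists [::]; split => //; split; first by rewrite big_nil; apply: sumr_ge0 => u hu; apply: hnn.
  move=> e he; rewrite big_nil leNgt; apply/negP => h.
  by move/negP: hex; apply; apply/existsP; exists e; rewrite he h.
have [[a b] /andP[habE hab0]] := existsP hex.
have [p [hsp hpn hpos]] := find_path hnn hcons habE hab0.
have /and3P[_ hpE /eqP hlt] := hsp.
set Z := path_edges s p.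
have ZE : {subset Z <= E} := path_edgesE hpE.
have hZn : Z != [::] by rewrite /Z /path_edges; case: (p) hpn.
have [es hes hmin] := seq_min f hZn.
set al := f es.
have hal : 0 < al := hpos _ hes.
pose f' := fun e => f e - al * ind R Z e.
have hnn' : nonneg f'.
  move=> e he; rewrite /f' /ind; case: ifP => h.
    by rewrite mulr1 subr_ge0; apply: hmin.
  by rewrite mulr0 subr0; apply: hnn.
have hcons' : consv f'.
  move=> v hvs hvt; rewrite /f' !sumrB -!mulr_sumr ind_in // ind_out //.
  by rewrite hcons // (mem_belast_mid hvs) // hlt.
have hind0 : forall e, 0 <= al * ind R Z e.
  by move=> e; rewrite /ind; case: ifP; rewrite ?mulr1 ?mulr0 // ltW.
have hprop : [set e | (e \in E) && (0 < f' e)] \proper [set e | (e \in E) && (0 < f e)].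
  apply/properP; split.
    apply/fintype.subsetP => e; rewrite !inE => /andP[-> h] /=.
    by apply: (lt_le_trans h); rewrite /f' gerBl.
  exists es; first by rewrite inE ZE // hal.
  by rewrite inE /f' /ind hes mulr1 /al subrr ltxx andbF.
have hn' : (#|[set e | (e \in E) && (0 < f' e)%R]| <= n)%N.
  by rewrite -ltnS; exact: (leq_trans (proper_card hprop) hn).
have [L' [hL1 [hL2 hL3]]] := IH f' hn' hnn' hcons'.
exists ((al, p) :: L'); split.
  move=> x; rewrite inE => /orP[/eqP -> /=|/hL1 //]; split => //; exact: ltW.
split.
  rewrite big_cons /=; move: hL2; rewrite /flow_val /f' sumrB -mulr_sumr ind_out //.
  have -> : s \in belast s p by case: (p) hpn => //= y q _; rewrite mem_head.
  by rewrite mulr1; lra.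
move=> e he; rewrite big_cons /=; have := hL3 e he; rewrite /f'; lra.
Qed.

End Find.



Section Conv.
Variables (V : finType) (R : realType) (E : {set V * V}) (C : V * V -> R).
Variables (k : nat) (P : 'I_k -> V * seq V) (lam : 'I_k -> R).
Hypothesis hlam : forall i, 0 <= lam i.

Definition feas (D : V * V -> R) (lt : 'I_k -> R) :=
  (forall i, 0 <= lt i <= lam i) /\
  (forall e, e \in E -> \sum_(i < k | e \in path_edges (P i).1 (P i).2) lt i <= D e).

Lemma T_has_sup (f : V * V -> R) : (forall e, e \in E -> f e <= C e) ->
  has_sup [set y : R | exists lt : 'I_k -> R,
        (forall i, 0 <= lt i <= lam i) /\
        (forall e, e \in E ->
           \sum_(i < k | e \in path_edges (P i).1 (P i).2) lt i <= C e - f e) /\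
        y = \sum_(i < k) lt i].
Proof.
move=> hf; split.
  exists 0, (fun _ => 0); split; first by move=> i; rewrite lexx hlam.
  split; last by rewrite big1.
  by move=> e he; rewrite big1 // subr_ge0 hf.
exists (\sum_(i < k) lam i) => y [lt [h1 [_ ->]]].
by apply: ler_sum => i _; case/andP: (h1 i).
Qed.

Lemma T_ge (f : V * V -> R) lt : (forall e, e \in E -> f e <= C e) ->
  feas (fun e => C e - f e) lt -> \sum_(i < k) lt i <= T_val E C P lam f.
Proof.
move=> hf [h1 h2]; rewrite /T_val.
apply: (sup_upper_bound (T_has_sup hf)).
by exists lt.
Qed.

Lemma T_approx (f : V * V -> R) eps : (forall e, e \in E -> f e <= C e) -> 0 < eps ->
  exists lt, feas (fun e => C e - f e) lt /\ T_val E C P lam f - eps < \sum_(i < k) lt i.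
Proof.
move=> hf he.
have [y [lt [h1 [h2 ->]]] hy] := sup_adherent he (T_has_sup hf).
by exists lt; split.
Qed.

Lemma conv_list (M : seq (R * (V * V -> R))) eps :
  (forall a, a \in M -> 0 <= a.1 /\ forall e, e \in E -> a.2 e <= C e) -> 0 < eps ->
  exists lt : 'I_k -> R,
    (forall i, 0 <= lt i <= (\sum_(a <- M) a.1) * lam i) /\
    (forall e, e \in E -> \sum_(i < k | e \in path_edges (P i).1 (P i).2) lt i
                          <= \sum_(a <- M) a.1 * (C e - a.2 e)) /\
    \sum_(a <- M) a.1 * T_val E C P lam a.2 - eps <= \sum_(i < k) lt i.
Proof.
elim: M eps => [|[b h] M IH] eps hM heps.
  exists (fun _ => 0); split; first by move=> i; rewrite big_nil mul0r lexx.
  split; first by move=> e _; rewrite !big_nil big1.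
  by rewrite !big_nil big1 // sub0r oppr_le0 ltW.
have hM' : forall a, a \in M -> 0 <= a.1 /\ forall e, e \in E -> a.2 e <= C e.
  by move=> a ha; apply: hM; rewrite inE ha orbT.
have [hb hh] : 0 <= b /\ forall e, e \in E -> h e <= C e by apply: (hM (b, h)); rewrite mem_head.
have heps2 : 0 < eps / 2 by rewrite divr_gt0.
have [lt' [l1 [l2 l3]]] := IH _ hM' heps2.
have hb1 : 0 < b + 1 by lra.
set ep := eps / 2 / (b + 1).
have hep : 0 < ep by rewrite /ep divr_gt0.
have hbep : b * ep <= eps / 2.
  have e1 : (b + 1) * ep = eps / 2 by rewrite /ep mulrC divfK // gt_eqF.
  rewrite -e1; apply: ler_wpM2r; [exact: ltW | lra].
have [lth [[f1 f2] f3]] := T_approx hh hep.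
exists (fun i => b * lth i + lt' i); split.
  move=> i; have /andP[a1 a2] := f1 i; have /andP[b1 b2] := l1 i.
  have c1 : 0 <= b * lth i by rewrite mulr_ge0.
  have c2 : b * lth i <= b * lam i by rewrite ler_wpM2l.
  rewrite big_cons /= mulrDl; apply/andP; split; lra.
split.
  move=> e he; rewrite big_split /= -mulr_sumr big_cons /=.
  have := f2 e he; have := l2 e he => d1 d2.
  have : b * (\sum_(i < k | e \in path_edges (P i).1 (P i).2) lth i) <= b * (C e - h e).
    by rewrite ler_wpM2l.
  lra.
rewrite big_split /= -mulr_sumr big_cons /=.
have : b * (T_val E C P lam h - ep) <= b * \sum_(i < k) lth i by rewrite ler_wpM2l // ltW.
rewrite mulrBr; lra.
Qed.

Lemma lambda_conv (f : V * V -> R) (M : seq (R * (V * V -> R))) :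
  (forall e, e \in E -> f e <= C e) ->
  (forall a, a \in M -> 0 <= a.1 /\ forall e, e \in E -> a.2 e <= C e) ->
  \sum_(a <- M) a.1 = 1 ->
  (forall e, e \in E -> f e <= \sum_(a <- M) a.1 * a.2 e) ->
  Lambda_f E C P lam f <= \sum_(a <- M) a.1 * Lambda_f E C P lam a.2.
Proof.
move=> hf hM h1 hdom.
rewrite /Lambda_f.
rewrite (eq_bigr (fun a => a.1 * \sum_(i < k) lam i - a.1 * T_val E C P lam a.2)); last by move=> a _; rewrite mulrBr.
rewrite sumrB -mulr_suml h1 mul1r lerD2l lerN2.
apply/ler_addgt0Pr => eps heps.
have [lt [l1 [l2 l3]]] := conv_list hM heps.
have : \sum_(i < k) lt i <= T_val E C P lam f.
  apply: T_ge => //; split.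
    by move=> i; have := l1 i; rewrite h1 mul1r.
  move=> e he; apply: (le_trans (l2 e he)).
  under eq_bigr => a _ do rewrite mulrBr.
  rewrite sumrB -mulr_suml h1 mul1r lerD2l lerN2.
  exact: hdom.
lra.
Qed.

End Conv.



Section Main.
Variables (V : finType) (R : realType) (E : {set V * V}) (C : V * V -> R) (s t : V) (gamma : R).
Hypothesis hacyc : acyclic E.
Hypothesis hC : forall e, e \in E -> 0 <= C e.
Hypothesis hst : exists (x : V) (p : seq V), is_st_path E s t x p.
Hypothesis hgam0 : 0 < gamma.
Hypothesis hgamC : forall e, e \in E -> gamma <= C e.

Definition pflow (p : seq V) : V * V -> R := fun e => gamma * ind R (path_edges s p) e.

Lemma pflow_ok p : is_st_path E s t s p ->
  flow_le E C s t gamma (pflow p) /\ single_path_flow E C s t (pflow p).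
Proof.
move=> hsp; have /and3P[_ hpE /eqP hlt] := hsp.
have hfl : is_flow E C s t (pflow p).
  split.
    move=> e he; rewrite /pflow /ind; case: ifP => _.
      by rewrite mulr1 (ltW hgam0) hgamC.
    by rewrite mulr0 lexx hC.
  move=> v hvs hvt; rewrite /pflow -!mulr_sumr ind_in // ind_out //.
  by rewrite (mem_belast_mid hvs) // hlt.
split; last first.
  split => //; exists s, p; split => // e he.
  by rewrite /pflow /ind; case: ifP => //; rewrite mulr0 ltxx.
split => //; rewrite /flow_val /pflow -mulr_sumr ind_out //.
by case: ifP; rewrite ?mulr1 ?mulr0 ?lexx // ltW.
Qed.

Lemma per_flow f : flow_le E C s t gamma f ->
  exists M : seq (R * (V * V -> R)),
    (forall a, a \in M -> 0 <= a.1 /\ flow_le E C s t gamma a.2 /\ single_path_flow E C s t a.2) /\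
    \sum_(a <- M) a.1 = 1 /\
    (forall e, e \in E -> f e <= \sum_(a <- M) a.1 * a.2 e).
Proof.
move=> [[hfb hcons] hval].
have hnn : nonneg E f by move=> e /hfb /andP[].
have [L [hL1 [hL2 hL3]]] := dec hacyc hst (leqnn _) hnn hcons.
have [x0 [p0 hp0]] := hst.
have hx0 : x0 = s by case/and3P: hp0 => /eqP.
subst x0.
set S := \sum_(a <- L) a.1.
have hS : S / gamma <= 1 by rewrite ler_pdivrMr // mul1r (le_trans hL2).
exists ((1 - S / gamma, pflow p0) :: [seq (a.1 / gamma, pflow a.2) | a <- L]).
split.
  move=> a; rewrite inE => /orP[/eqP -> /=|/mapP [b hb ->] /=].
    by split; [rewrite subr_ge0 hS | exact: pflow_ok].
  have [hb1 hb2] := hL1 b hb.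
  by split; [rewrite divr_ge0 ?(ltW hgam0) | exact: pflow_ok].
split.
  by rewrite big_cons big_map /= -mulr_suml subrK.
move=> e he; rewrite big_cons big_map /=.
rewrite (eq_bigr (fun a => a.1 * ind R (path_edges s a.2) e)); last first.
  by move=> a _; rewrite /pflow mulrA divfK // gt_eqF.
have h0 : 0 <= (1 - S / gamma) * pflow p0 e.
  rewrite mulr_ge0 // ?subr_ge0 // /pflow /ind; case: ifP => _; [rewrite mulr1; exact: ltW | by rewrite mulr0].
have := hL3 e he; lra.
Qed.

Lemma list_flow (w : seq (R * (V * V -> R))) :
  (forall a, a \in w -> 0 <= a.1 /\ flow_le E C s t gamma a.2) ->
  exists w' : seq (R * (V * V -> R)),
    (forall a, a \in w' -> 0 <= a.1 /\ flow_le E C s t gamma a.2 /\ single_path_flow E C s t a.2) /\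
    \sum_(a <- w') a.1 = \sum_(a <- w) a.1 /\
    (forall (k : nat) (P : 'I_k -> V * seq V) (lam : 'I_k -> R),
       user_paths E C P lam -> Lambda_w E C P lam w <= Lambda_w E C P lam w').
Proof.
elim: w => [|[a f] w IH] hw.
  by exists [::]; split.
have [ha hf] : 0 <= a /\ flow_le E C s t gamma f by apply: (hw (a, f)); rewrite mem_head.
have [w'' [h1 [h2 h3]]] : exists w' : seq (R * (V * V -> R)),
    (forall a, a \in w' -> 0 <= a.1 /\ flow_le E C s t gamma a.2 /\ single_path_flow E C s t a.2) /\
    \sum_(a <- w') a.1 = \sum_(a <- w) a.1 /\
    (forall (k : nat) (P : 'I_k -> V * seq V) (lam : 'I_k -> R),
       user_paths E C P lam -> Lambda_w E C P lam w <= Lambda_w E C P lam w').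
  by apply: IH => b hb; apply: hw; rewrite inE hb orbT.
have [M [m1 [m2 m3]]] := per_flow hf.
exists ([seq (a * b.1, b.2) | b <- M] ++ w''); split.
  move=> b; rewrite mem_cat => /orP[/mapP [c hc ->] /=|/h1 //].
  have [c1 [c2 c3]] := m1 c hc.
  by rewrite mulr_ge0.
split.
  by rewrite big_cat big_map /= -mulr_sumr m2 mulr1 h2 big_cons.
move=> k P lam hu; rewrite /Lambda_w big_cat big_cons big_map /=.
apply: lerD; last exact: h3.
rewrite (eq_bigr (fun b => a * (b.1 * Lambda_f E C P lam b.2))); last by move=> b _; rewrite mulrA.
rewrite -mulr_sumr; apply: ler_wpM2l => //.
have [_ [hlam _]] := hu.
apply: (lambda_conv P hlam).
- by move=> e he; case: hf => [[hfb _] _]; case/andP: (hfb e he).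
- move=> b hb; have [b1 [[[b2 _] _] _]] := m1 b hb; split => // e he.
  by case/andP: (b2 e he).
- exact: m2.
- exact: m3.
Qed.

End Main.

Unset Implicit Arguments.
Theorem proposition1 (V : finType) (R : realType) (E : {set V * V})
  (C : V * V -> R) (s t : V) (gamma : R)
  (hacyc : acyclic E)
  (hC : forall e, e \in E -> 0 <= C e)
  (hst : exists (x : V) (p : seq V), is_st_path E s t x p)
  (hgam0 : 0 < gamma)
  (hgamC : forall e, e \in E -> gamma <= C e)
  (w : seq (R * (V * V -> R)))
  (hw : interdiction E C s t gamma w) :
  exists w' : seq (R * (V * V -> R)),
    interdiction E C s t gamma w' /\
    (forall a, a \in w' -> single_path_flow E C s t a.2) /\
    (forall (k : nat) (P : 'I_k -> V * seq V) (lam : 'I_k -> R),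
       user_paths E C P lam ->
       Lambda_w E C P lam w <= Lambda_w E C P lam w').
Proof.
case: hw => hw1 hw2.
have [w' [h1 [h2 h3]]] := list_flow hacyc hC hst hgam0 hgamC hw1.
exists w'; split; last split => //.
  split; last by rewrite h2.
  by move=> a /h1 [? [? _]].
by move=> a /h1 [_ [_ ?]].
Qed.
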